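(* For $n\geq1$ let $\ell_n=\sqrt[n]{n!}$ and $x_n=\log(\ell_{n+1}/\ell_n)$. Then for every integer $n\geq 271$, $$0\leq x_{n+1}+x_n\leq \frac2n-\frac{\log n}{n^2}-\frac{15/16+\log(2\pi)}{n^2}\leq\frac2n.$$
   Context: $\log$ denotes the natural logarithm. *)

(* Defs.v *)
From Stdlib Require Import Reals Arith Factorial.
Open Scope R_scope.

(* ell n = (n!)^(1/n), the n-th root of n!, for n >= 1 (n! > 0 so Rpower is the usual power). *)
Definition ell (n : nat) : R := Rpower (INR (fact n)) (/ INR n).

Definition xseq (n : nat) : R := ln (ell (S n) / ell n).

(* Main.v *)
Require Import Defs.
From Stdlib Require Import Reals Lra Psatz Lia Arith Factorial.
From Coquelicot Require Import Coquelicot.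
Open Scope R_scope.

Lemma mono0 (f df : R -> R) (b : R) : 0 <= b ->
  (forall x, 0 <= x <= b -> is_derive f x (df x)) ->
  (forall x, 0 <= x <= b -> 0 <= df x) -> f 0 <= f b.
Proof.
intros Hb Hd Hp.
destruct (Req_dec b 0) as [->|Hb0]; [lra|].
destruct (MVT_gen f 0 b df) as [c [Hc Heq]].
- intros x Hx. rewrite Rmin_left in Hx by lra. rewrite Rmax_right in Hx by lra.
  apply Hd; lra.
- intros x Hx. rewrite Rmin_left in Hx by lra. rewrite Rmax_right in Hx by lra.
  apply continuity_pt_filterlim.
  apply (@ex_derive_continuous R_AbsRing R_NormedModule f x).
  eexists. apply Hd; lra.
- rewrite Rmin_left in Hc by lra. rewrite Rmax_right in Hc by lra.
  assert (0 <= df c) by (apply Hp; lra).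
  assert (0 <= df c * (b - 0)) by (apply Rmult_le_pos; lra). lra.
Qed.

Lemma ln_artanh_lb (s : R) : 0 <= s < 1 -> 2 * s <= ln (1 + s) - ln (1 - s).
Proof.
intros Hs.
pose (f := fun x => ln (1 + x) - ln (1 - x) - 2 * x).
assert (H := mono0 f (fun x => /(1+x) + /(1-x) - 2) s (proj1 Hs)).
assert (f 0 = 0) as H0.
{ unfold f. rewrite Rplus_0_r, Rminus_0_r, ln_1. ring. }
cut (f 0 <= f s). { unfold f at 2. lra. }
apply H.
- intros x Hx. unfold f. auto_derive.
  + lra.
  + field. lra.
- intros x Hx.
  replace (/ (1 + x) + / (1 - x) - 2) with (2 * x * x / ((1+x)*(1-x))) by (field; lra).
  apply Rdiv_le_0_compat; nra.
Qed.

Lemma ln_artanh_ub (s : R) : 0 <= s < 1 ->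
  ln (1 + s) - ln (1 - s) <= 2 * s + 2 * s ^ 3 / (3 * (1 - s ^ 2)).
Proof.
intros Hs.
pose (f := fun x => 2 * x + 2 * x ^ 3 / (3 * (1 - x ^ 2)) - (ln (1 + x) - ln (1 - x))).
assert (H := mono0 f (fun x => 4 * x ^ 4 / (3 * (1 - x ^ 2) ^ 2)) s (proj1 Hs)).
assert (f 0 = 0) as H0.
{ unfold f. rewrite Rplus_0_r, Rminus_0_r, ln_1. field. }
cut (f 0 <= f s). { unfold f at 2. lra. }
apply H.
- intros x Hx. unfold f. auto_derive.
  + repeat split; try lra; nra.
  + field. repeat split; try lra; nra.
- intros x Hx.
  apply Rdiv_le_0_compat. nra.
  assert (0 < 1 - x^2) by nra. nra.
Qed.

Lemma ln1p_ub (t : R) : 0 <= t -> ln (1 + t) <= t - t^2/2 + t^3/3.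
Proof.
intros Ht.
pose (f := fun x => x - x^2/2 + x^3/3 - ln (1 + x)).
assert (H := mono0 f (fun x => x ^ 3 / (1 + x)) t Ht).
assert (f 0 = 0) as H0.
{ unfold f. rewrite Rplus_0_r, ln_1. field. }
cut (f 0 <= f t). { unfold f at 2. lra. }
apply H.
- intros x Hx. unfold f. auto_derive.
  + lra.
  + field. lra.
- intros x Hx. apply Rdiv_le_0_compat. apply pow_le; lra. lra.
Qed.

Lemma ln_ratio_ub (s : R) : 0 <= s < 1 ->
  ln ((1 + s) / (1 - s)) <= 2 * s + 2 * s ^ 3 / (3 * (1 - s ^ 2)).
Proof. intros Hs. rewrite ln_div by lra. apply ln_artanh_ub; auto. Qed.

Lemma ln2_ub : ln 2 <= 25/36.
Proof.
replace 2 with ((1 + /3) / (1 - /3)) by field.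
eapply Rle_trans; [apply ln_ratio_ub; lra|]. right; field.
Qed.

Lemma ln54_ub : ln (5/4) <= 2/9 + 1/1080.
Proof.
replace (5/4) with ((1 + /9) / (1 - /9)) by field.
eapply Rle_trans; [apply ln_ratio_ub; lra|]. right; field.
Qed.

Lemma PI_ub : PI <= 31416/10000.
Proof.
assert (H := proj2 (PI_2_3_7_ineq 2)).
unfold tg_alt, PI_2_3_7_tg, Ratan_seq in H. simpl in H.
lra.
Qed.

Lemma ln2pi_ub : ln (2 * PI) <= 8 * (2/9 + 1/1080) + (2 * (33/1250) + 2 * (33/1250) ^ 3 / (3 * (1 - (33/1250) ^ 2))).
Proof.
assert (HP := PI_ub). assert (HP0 := PI_RGT_0).
apply Rle_trans with (ln ((5/4)^8 * ((1 + 33/1250) / (1 - 33/1250)))).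
- apply ln_le; lra.
- rewrite ln_mult, ln_pow by lra. simpl INR.
  assert (H1 := ln54_ub). assert (H2 := ln_ratio_ub (33/1250)).
  lra.
Qed.

Lemma ln271_ub : ln 271 <= 8 * (25/36) + (2/9 + 1/1080).
Proof.
apply Rle_trans with (ln (2^8 * (5/4))).
- apply ln_le; lra.
- rewrite ln_mult, ln_pow by lra. simpl INR.
  assert (H1 := ln54_ub). assert (H2 := ln2_ub). lra.
Qed.

Definition Lf (n : nat) : R := ln (INR (fact n)).
Definition dd (n : nat) : R := Lf n - (INR n + /2) * ln (INR n) + INR n.

Lemma Lf_S n : Lf (S n) = ln (INR (S n)) + Lf n.
Proof.
unfold Lf. change (fact (S n)) with (S n * fact n)%nat.
rewrite mult_INR, ln_mult; auto. apply lt_0_INR; lia. apply INR_fact_lt_0.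
Qed.

Lemma xseq_eq n : (1 <= n)%nat -> xseq n = Lf (S n) / INR (S n) - Lf n / INR n.
Proof.
intros Hn. unfold xseq, ell, Rpower.
rewrite ln_div by apply exp_pos. rewrite !ln_exp. unfold Lf, Rdiv. ring.
Qed.

Lemma K_bounds (N : R) : 0 < N ->
  1 <= (N + /2) * (ln (N + 1) - ln N) <= 1 + / (12 * N * (N + 1)).
Proof.
intros HN.
set (s := / (2 * N + 1)).
assert (Hs0 : 0 < s) by (unfold s; apply Rinv_0_lt_compat; lra).
assert (Hs1 : s < 1).
{ unfold s. rewrite <- Rinv_1. apply Rinv_lt_contravar; lra. }
assert (E : ln (N + 1) - ln N = ln (1 + s) - ln (1 - s)).
{ rewrite <- !ln_div by lra. f_equal. unfold s. field. lra. }
rewrite E.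
assert (L1 := ln_artanh_lb s (conj (Rlt_le _ _ Hs0) Hs1)).
assert (L2 := ln_artanh_ub s (conj (Rlt_le _ _ Hs0) Hs1)).
assert (E1 : (N + /2) * (2 * s) = 1) by (unfold s; field; lra).
assert (E2 : (N + /2) * (2 * s ^ 3 / (3 * (1 - s ^ 2))) = / (12 * N * (N + 1))).
{ unfold s. field. repeat split; try lra.
  all: try (intro H; field_simplify in H; try lra; nra). }
assert (HN2 : 0 < N + /2) by lra.
split.
- apply Rle_trans with ((N + /2) * (2 * s)); [lra|].
  apply Rmult_le_compat_l; lra.
- apply Rle_trans with ((N + /2) * (2 * s + 2 * s ^ 3 / (3 * (1 - s ^ 2)))).
  + apply Rmult_le_compat_l. lra. exact L2.
  + rewrite Rmult_plus_distr_l. lra.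
Qed.

Lemma dd_bounds n : 11/12 + / (12 * INR (S n)) <= dd (S n) <= 1.
Proof.
induction n as [|n IH].
- unfold dd. replace (Lf 1) with 0. simpl INR. rewrite ln_1.
  split; [right; field | lra].
  unfold Lf. simpl. rewrite ln_1. reflexivity.
- assert (HN : 0 < INR (S n)) by (apply lt_0_INR; lia).
  set (N := INR (S n)) in *.
  assert (E : dd (S (S n)) = dd (S n) + 1 - (N + /2) * (ln (N + 1) - ln N)).
  { unfold dd. rewrite Lf_S. rewrite (S_INR (S n)). fold N. ring. }
  rewrite E, S_INR. fold N.
  destruct (K_bounds N HN) as [K1 K2].
  assert (E3 : / (12 * N) - / (12 * N * (N + 1)) = / (12 * (N + 1))) by (field; lra).
  split; lra.
Qed.

Lemma ln_le_xm1 (y : R) : 1 <= y -> ln y <= y - 1.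
Proof.
intros Hy. destruct (Req_dec y 1) as [->|H]. rewrite ln_1; lra.
assert (H1 := exp_ineq1 (y - 1)).
rewrite <- (ln_exp (y - 1)). left. apply ln_increasing; lra.
Qed.

Lemma ln_ge0 (y : R) : 1 <= y -> 0 <= ln y.
Proof. intros. rewrite <- ln_1. apply ln_le; lra. Qed.

Theorem mainTheorem9 : forall n : nat, (271 <= n)%nat ->
  0 <= xseq (S n) + xseq n /\
  xseq (S n) + xseq n <=
    2 / INR n - ln (INR n) / (INR n ^ 2) - (15 / 16 + ln (2 * PI)) / (INR n ^ 2) /\
  2 / INR n - ln (INR n) / (INR n ^ 2) - (15 / 16 + ln (2 * PI)) / (INR n ^ 2) <= 2 / INR n.
Proof.
intros n Hn.
assert (HN : 271 <= INR n) by (replace 271 with (INR 271) by (simpl; lra); apply le_INR; exact Hn).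
assert (Dn : 11/12 <= dd n <= 1).
{ destruct n as [|m]; [lia|]. destruct (dd_bounds m) as [D1 D2].
  assert (0 < / (12 * INR (S m))) by (apply Rinv_0_lt_compat; lra). lra. }
rewrite (xseq_eq (S n)) by lia. rewrite (xseq_eq n) by lia.
rewrite Lf_S, Lf_S, !S_INR.
set (N := INR n) in *.
set (l := ln N).
set (a := ln (1 + / N)).
set (b := ln (1 + 2 / N)).
set (P := ln (2 * PI)).
set (D := dd n). assert (DnD : 11/12 <= D <= 1) by exact Dn.
assert (Ea : ln (N + 1) = l + a).
{ unfold l, a. rewrite <- ln_mult by (try apply Rplus_lt_le_0_compat; try lra;
    left; apply Rinv_0_lt_compat; lra). f_equal. field. lra. }
assert (Eb : ln (N + 1 + 1) = l + b).
{ unfold l, b. rewrite <- ln_mult. f_equal. field. lra. lra.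
  assert (0 < 2 / N) by (apply Rdiv_lt_0_compat; lra). lra. }
assert (EL : Lf n = D + (N + /2) * l - N) by (unfold D, dd; fold N; fold l; ring).
rewrite Ea, Eb, EL.
assert (ES : (l + b + (l + a + (D + (N + / 2) * l - N))) / (N + 1 + 1) -
   (l + a + (D + (N + / 2) * l - N)) / (N + 1) +
   ((l + a + (D + (N + / 2) * l - N)) / (N + 1) - (D + (N + / 2) * l - N) / N)
   = (N * (a + b) - l + 2 * N - 2 * D) / (N * (N + 2))) by (field; lra).
rewrite ES.
assert (Ha0 : 0 <= a) by (apply ln_ge0; assert (0 < / N) by (apply Rinv_0_lt_compat; lra); lra).
assert (Hb0 : 0 <= b) by (apply ln_ge0; assert (0 < 2 / N) by (apply Rdiv_lt_0_compat; lra); lra).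
assert (Hl0 : 0 <= l) by (apply ln_ge0; lra).
assert (HP0 : 0 <= P) by (apply ln_ge0; assert (H := PI2_3_2); lra).
assert (Hl1 : l <= N - 1) by (apply ln_le_xm1; lra).
split; [|split].
- apply Rdiv_le_0_compat; [|nra].
  assert (0 <= N * (a + b)) by (apply Rmult_le_pos; lra). lra.
-
  set (u := / N).
  assert (Hu : 0 < u) by (apply Rinv_0_lt_compat; lra).
  assert (HuN : N * u = 1) by (unfold u; field; lra).
  assert (Hu271 : u <= /271) by (unfold u; apply Rinv_le_contravar; lra).
  assert (Ha : a <= u - u^2/2 + u^3/3) by (apply ln1p_ub; lra).
  assert (Hb : b <= 2*u - (2*u)^2/2 + (2*u)^3/3).
  { unfold b. replace (2 / N) with (2 * u) by (unfold u; field; lra). apply ln1p_ub; lra. }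
  assert (HNa : N^2 * a <= N - /2 + u/3).
  { apply Rle_trans with (N^2 * (u - u^2/2 + u^3/3)).
    apply Rmult_le_compat_l; [nra|exact Ha].
    right. unfold u. field. lra. }
  assert (HNb : N^2 * b <= 2 * N - 2 + 8 * u/3).
  { apply Rle_trans with (N^2 * (2*u - (2*u)^2/2 + (2*u)^3/3)).
    apply Rmult_le_compat_l; [nra|exact Hb].
    right. unfold u. field. lra. }
  assert (HPu := ln2pi_ub). fold P in HPu.
  assert (HlN : l <= ln 271 + (N / 271 - 1)).
  { unfold l. replace N with (271 * (N / 271)) at 1 by field.
    rewrite ln_mult by lra. assert (H := ln_le_xm1 (N / 271)). lra. }
  assert (H271 := ln271_ub).
  assert (HND : N * (11/12) <= N * D) by (apply Rmult_le_compat_l; lra).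
  assert (HNP : N * P <= N * (8 * (2/9 + 1/1080) + (2 * (33/1250) + 2 * (33/1250) ^ 3 / (3 * (1 - (33/1250) ^ 2))))) by (apply Rmult_le_compat_l; lra).
  replace (2 / N - l / N ^ 2 - (15 / 16 + P) / N ^ 2) with ((2 * N - l - (15/16 + P)) / N^2) by (field; lra).
  apply Rmult_le_reg_r with (N^2 * (N + 2)); [nra|].
  replace ((N * (a + b) - l + 2 * N - 2 * D) / (N * (N + 2)) * (N ^ 2 * (N + 2)))
    with (N^2 * a + N^2 * b - N * l + 2 * N * N - 2 * (N * D)) by (field; lra).
  replace ((2 * N - l - (15 / 16 + P)) / N ^ 2 * (N ^ 2 * (N + 2)))
    with ((2 * N - l - 15/16) * (N + 2) - (N * P) - 2 * P) by (field; lra).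
  nra.
- assert (0 <= l / N^2) by (apply Rdiv_le_0_compat; nra).
  assert (0 <= (15/16 + P) / N^2) by (apply Rdiv_le_0_compat; nra).
  lra.
Qed.
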